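(* Let $k$ be a finite field with $q$ elements. Let $f=p^d\in V_n$, where $p$ is an irreducible homogeneous polynomial and $d\ge1$, so that $R(f)$ is an indecomposable regular representation. Suppose that the map $V_{n-1}\to V_n/\langle f\rangle$ given by multiplication by $y$ is not bijective. Then the quiver $|R(f)|$ has exactly one loop, and this loop is at the vertex $0$. Moreover, after removing this loop, $|R(f)|$ is a directed tree with the following properties: 1. no arrow starts at $0$; 2. at every vertex other than $0$ exactly one arrow starts; 3. at every vertex other than $0$ either exactly $q$ arrows end or none end, and at $0$ exactly $q-1$ arrows end; 4. every vertex at which no arrow ends is connected to $0$ by a unique directed path, and this path has length $d$.
   Context: A quiver is a quadruple $(\Gamma_0,\Gamma_1,s,t)$ with vertex set $\Gamma_0$, arrow set $\Gamma_1$, and start and terminus maps $s,t$. For a linear Kronecker representation $f,g\colon X_1\to X_0$, the quiver $|X|$ has vertices $X_0$, arrows $X_1$, $s=f$ and $t=g$. $V_n\subset k[x,y]$ is the space of homogeneous polynomials of degree $n$, with $V_{-1}=0$. For $0\ne f\in V_n$, $R(f)$ is the representation $V_{n-1}\rightrightarrows V_n/\langle f\rangle$ whose first map is multiplication by $x$ and whose second map is multiplication by $y$, each followed by the projection. *)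

(* Defs.v *)
From HB Require Import structures.
From mathcomp Require Import all_boot all_order all_algebra all_field.
Set Implicit Arguments. Unset Strict Implicit. Unset Printing Implicit Defensive.
Import GRing.Theory.
Local Open Scope ring_scope.

Section Quiver.
Variables (V A : eqType) (s t : A -> V).

Definition joins (e : A) (a b : V) : bool :=
  ((s e == a) && (t e == b)) || ((s e == b) && (t e == a)).

Fixpoint uwalk (u w : V) (es : seq A) : bool :=
  match es with
  | [::] => u == w
  | e :: es' => ((s e == u) && uwalk (t e) w es') || ((t e == u) && uwalk (s e) w es')
  end.

Fixpoint dwalk (u w : V) (es : seq A) : bool :=
  match es with
  | [::] => u == w
  | e :: es' => (s e == u) && dwalk (t e) w es'
  end.

Definition dpath (u w : V) (es : seq A) : bool :=
  dwalk u w es && uniq (u :: map t es).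

Definition qconnected (VP : pred V) (AP : pred A) : Prop :=
  forall u w, VP u -> VP w -> exists es, all AP es && uwalk u w es.

(* underlying graph has no (undirected) cycle: a cyclic sequence of distinct
   vertices vs_0,...,vs_{m-1} (m >= 1) and distinct arrows es_i joining vs_i
   and vs_{i+1 mod m} *)
Definition qacyclic (AP : pred A) : Prop :=
  ~ exists (es : seq A) (vs : seq V),
      [/\ es != [::], size vs = size es, uniq es && uniq vs, all AP es
        & all (fun x => joins x.1 x.2.1 x.2.2) (zip es (zip vs (rot 1 vs)))].

Definition qtree (VP : pred V) (AP : pred A) : Prop :=
  qconnected VP AP /\ qacyclic AP.
End Quiver.

(** * Homogeneous polynomials in k[x,y].
    k[x,y] is modelled as {poly {poly k}}: the outer variable is y, the inner
    one is x.  V_m is modelled by coordinate vectors 'rV_(m.+1): the vector a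
    corresponds to sum_i a_i x^i y^(m-i).  In particular V_{n-1} = 'rV_n
    (and V_{-1} = 'rV_0 = 0). *)
Section Hom.
Variable k : fieldType.

Definition Xv : {poly {poly k}} := ('X)%:P.
Definition Yv : {poly {poly k}} := 'X.

Definition hpoly (m : nat) (a : 'rV[k]_m) : {poly {poly k}} :=
  \sum_(i < m) (a 0 i)%:P%:P * Xv ^+ i * Yv ^+ (m.-1 - i).

Definition hcoef (P : {poly {poly k}}) (i j : nat) : k := (P`_j)`_i.

Definition homog (m : nat) (P : {poly {poly k}}) : Prop :=
  forall i j, hcoef P i j != 0 -> (i + j)%N = m.

Definition hvec (n : nat) (P : {poly {poly k}}) : 'rV[k]_(n.+1) :=
  \row_(i < n.+1) hcoef P i (n - i).
End Hom.

Definition irreducible_elt (R : idomainType) (p : R) : Prop :=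
  [/\ p != 0, p \isn't a GRing.unit
    & forall a b, p = a * b -> a \is a GRing.unit \/ b \is a GRing.unit].

Section Rf.
Variables (k : finFieldType) (n : nat) (F : 'rV[k]_(n.+1)).

Definition coset (v : 'rV[k]_(n.+1)) : {set 'rV[k]_(n.+1)} :=
  [set v + c *: F | c : k].

Definition isVertex : pred {set 'rV[k]_(n.+1)} :=
  fun C => [exists v : 'rV[k]_(n.+1), C == coset v].

Definition Rsrc (a : 'rV[k]_n) : {set 'rV[k]_(n.+1)} := coset (hvec n (Xv k * hpoly a)).
Definition Rtgt (a : 'rV[k]_n) : {set 'rV[k]_(n.+1)} := coset (hvec n (Yv k * hpoly a)).
End Rf.

(* Main.v *)
Require Import Defs.
From HB Require Import structures.
From mathcomp Require Import all_boot all_order all_algebra all_field.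
From mathcomp Require Import zify.
Set Implicit Arguments. Unset Strict Implicit. Unset Printing Implicit Defensive.
Import GRing.Theory.
Local Open Scope ring_scope.

Section H.
Variable k : fieldType.

Definition rget m (a : 'rV[k]_m) (j : nat) : k :=
  if insub j is Some o then a 0 o else 0.

Lemma rget_ord m (a : 'rV[k]_m) (o : 'I_m) : rget a o = a 0 o.
Proof. by rewrite /rget valK. Qed.

Lemma rget_out m (a : 'rV[k]_m) j : (m <= j)%N -> rget a j = 0.
Proof. by move=> h; rewrite /rget insubN // -leqNgt. Qed.

Lemma hcoefD (P Q : {poly {poly k}}) i j : hcoef (P + Q) i j = hcoef P i j + hcoef Q i j.
Proof. by rewrite /hcoef !coefD. Qed.

Lemma hcoef_sum m (G : 'I_m -> {poly {poly k}}) i j :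
  hcoef (\sum_(l < m) G l) i j = \sum_(l < m) hcoef (G l) i j.
Proof. by rewrite /hcoef !coef_sum. Qed.

Lemma hcoef_mono (c : k) a b i j :
  hcoef (c%:P%:P * Xv k ^+ a * Yv k ^+ b) i j = if (i == a) && (j == b) then c else 0.
Proof.
rewrite /hcoef /Xv /Yv -rmorphXn /= -rmorphM /= coefMXn.
case: (ltnP j b) => hjb.
  by rewrite coef0 (_ : (j == b) = false) ?andbF //; apply/negbTE; rewrite neq_ltn hjb.
rewrite coefC subn_eq0.
case: (eqVneq j b) => [->|hne]; last first.
  by rewrite (_ : (j <= b)%N = false) ?coef0 ?andbF //; apply/negbTE; rewrite -ltnNge ltn_neqAle eq_sym hne.
rewrite leqnn coefCM coefXn andbT; case: eqP => _; by rewrite ?mulr1 ?mulr0.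
Qed.

Lemma hcoef_hpoly m (a : 'rV[k]_m) i j :
  hcoef (hpoly a) i j = if (i + j == m.-1)%N then rget a i else 0.
Proof.
rewrite /hpoly hcoef_sum.
under eq_bigr do rewrite hcoef_mono.
case: (ltnP i m) => him; last first.
  rewrite rget_out // if_same big1 // => l _.
  by rewrite (_ : (i == l) = false) //; apply/negbTE; rewrite neq_ltn (leq_trans (ltn_ord l) him) orbT.
rewrite (bigD1 (Ordinal him)) //= big1 ?addr0; last first.
  move=> l /negbTE hl; case: eqP => // hi; move: hl.
  by rewrite (_ : Ordinal him = l) ?eqxx //; apply/val_inj; rewrite /= hi.
rewrite eqxx /= (_ : a 0 (Ordinal him) = rget a i); last by rewrite -(rget_ord a (Ordinal him)).
have -> : (j == m.-1 - i)%N = (i + j == m.-1)%N by apply/eqP/eqP; lia.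
by case: ifP.
Qed.

Lemma hcoefXv P i j : hcoef (Xv k * P) i j = if i is i'.+1 then hcoef P i' j else 0.
Proof. by rewrite /hcoef /Xv coefCM coefXM; case: i. Qed.

Lemma hcoefYv P i j : hcoef (Yv k * P) i j = if j is j'.+1 then hcoef P i j' else 0.
Proof. by rewrite /hcoef /Yv coefXM; case: j => //=; rewrite coef0. Qed.

End H.

Lemma hvecX (k : fieldType) n (a : 'rV[k]_n) :
  hvec n (Xv k * hpoly a) = \row_(i < n.+1) (if (i:nat) is i'.+1 then rget a i' else 0).
Proof.
apply/rowP => i; rewrite !mxE hcoefXv; case: i => [[|i] hi] //=.
rewrite hcoef_hpoly (_ : (i + (n - i.+1) == n.-1)%N = true) //; apply/eqP; lia.
Qed.

Lemma hvecY (k : fieldType) n (a : 'rV[k]_n) :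
  hvec n (Yv k * hpoly a) = \row_(i < n.+1) rget a i.
Proof.
apply/rowP => i; rewrite !mxE hcoefYv; case: i => [i hi] /=.
case hni: (n - i)%N => [|j].
  by rewrite rget_out //; lia.
rewrite hcoef_hpoly (_ : (i + j == n.-1)%N = true) //; apply/eqP; lia.
Qed.

Section Cos.
Variables (k : finFieldType) (n : nat) (F : 'rV[k]_(n.+1)).

Lemma coset_mem v : v \in coset F v.
Proof. by apply/imsetP; exists 0 => //; rewrite scale0r addr0. Qed.

Lemma coset_eqE u w : coset F u = coset F w -> exists c, u = w + c *: F.
Proof.
move=> h; have := coset_mem u; rewrite h => /imsetP [c _ ->]; by exists c.
Qed.

Lemma coset_eqI u w c : u = w + c *: F -> coset F u = coset F w.
Proof.
move=> ->; apply/setP => x; apply/imsetP/imsetP => [[c' _ ->]|[c' _ ->]].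
  by exists (c + c') => //; rewrite scalerDl addrA.
by exists (c' - c) => //; rewrite scalerDl scaleNr [c' *: F + _]addrC addrA addrK.
Qed.
End Cos.

Lemma F_last (k : finFieldType) n (F : 'rV[k]_(n.+1)) :
  ~ ((forall a b : 'rV[k]_n, Rtgt F a = Rtgt F b -> a = b) /\
     (forall C, isVertex F C -> exists a : 'rV[k]_n, Rtgt F a = C)) ->
  rget F n = 0.
Proof.
move=> hn; apply/eqP; apply/negPn/negP => hF; apply: hn; split.
  move=> a b; rewrite /Rtgt !hvecY => /coset_eqE [c hc].
  have := congr1 (fun v : 'rV[k]_(n.+1) => v 0 ord_max) hc; rewrite !mxE /= !rget_out //.
  rewrite -(rget_ord F ord_max) /= add0r => /esym/eqP; rewrite mulf_eq0 (negbTE hF) orbF => /eqP c0.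
  move: hc; rewrite c0 scale0r addr0 => hc.
  apply/rowP => j; rewrite -!(rget_ord _ j).
  have := congr1 (fun v : 'rV[k]_(n.+1) => v 0 (widen_ord (leqnSn n) j)) hc; by rewrite !mxE.
move=> C /existsP [v /eqP ->].
pose w := v + (- (rget v n / rget F n)) *: F.
exists (\row_(j < n) w 0 (widen_ord (leqnSn n) j)).
rewrite /Rtgt hvecY; apply: (coset_eqI (c := - (rget v n / rget F n))).
apply/rowP => i; rewrite !mxE.
case: (ltnP i n) => hi.
  have -> : rget (\row_j w 0 (widen_ord (leqnSn n) j)) i = w 0 i.
    by rewrite -[i : nat]/(nat_of_ord (Ordinal hi)) rget_ord mxE; congr (w 0 _); apply/val_inj.
  by rewrite /w !mxE.
rewrite rget_out // (_ : i = ord_max); last by apply/val_inj => /=; have := ltn_ord i; lia.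
rewrite -!(rget_ord _ ord_max) /= mulNr divfK // subrr //.
Qed.

Lemma F_form (k : fieldType) n (F : 'rV[k]_(n.+1)) (p : {poly {poly k}}) d :
  irreducible_elt p -> (0 < d)%N -> hpoly F = p ^+ d -> rget F n = 0 ->
  [/\ n = d, rget F 0 != 0 & forall i, i != 0%N -> rget F i = 0].
Proof.
move=> [p0 pu pirr] d0 hF Fn.
have h0 : (hpoly F)`_0 = 0.
  apply/polyP => i; rewrite coef0 -[((hpoly F)`_0)`_i]/(hcoef (hpoly F) i 0) hcoef_hpoly addn0 /=.
  by case: eqP => // ->.
have hp0 : p`_0 = 0.
  move: h0; rewrite hF -horner_coef0 horner_exp horner_coef0 => /eqP.
  by rewrite expf_eq0 d0 /= => /eqP.
have : root p 0 by rewrite /root horner_coef0 hp0.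
move=> /factor_theorem [q hq]; move: hq; rewrite subr0 => hq.
have qu : q \is a GRing.unit.
  case: (pirr _ _ hq) => // /[!poly_unitE]; by rewrite size_polyX.
move: qu; rewrite poly_unitE => /andP [/eqP sq q0u].
move: q0u; rewrite poly_unitE => /andP [/eqP sq0 /[!unitfE] c0].
have hq' : q = ((q`_0)`_0)%:P%:P.
  have e1 : q = (q`_0)%:P by apply: size1_polyC; rewrite sq.
  have e2 : q`_0 = ((q`_0)`_0)%:P by apply: size1_polyC; rewrite sq0.
  by rewrite {1}e1 {1}e2.
set c := (q`_0)`_0 in c0 hq'.
have HF : hpoly F = (c ^+ d)%:P%:P * Xv k ^+ 0 * Yv k ^+ d.
  by rewrite hF hq hq' exprMn expr0 mulr1 !rmorphXn.
have key : forall i j, (if (i + j == n)%N then rget F i else 0) =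
                      if (i == 0%N) && (j == d) then c ^+ d else 0.
  by move=> i j; rewrite -hcoef_mono -HF hcoef_hpoly.
have cd0 : c ^+ d != 0 by rewrite expf_eq0 negb_and c0 orbT.
have nd : n = d.
  have := key 0%N d; rewrite !eqxx /=; case: eqP => // _ h.
  by move: cd0; rewrite -h eqxx.
split => //.
  by have := key 0%N d; rewrite add0n -{1}nd !eqxx /= => ->.
move=> i i0; have := key i (n - i)%N.
rewrite (negbTE i0) /=; case: (leqP i n) => hin.
  by rewrite subnKC // eqxx.
by rewrite rget_out.
Qed.

Section Shift.
Variables (k : fieldType) (n : nat).
Implicit Types (a u : 'rV[k]_n).

Lemma rgetD m (u v : 'rV[k]_m) j : rget (u + v) j = rget u j + rget v j.
Proof. by rewrite /rget; case: insub => [o|]; rewrite ?mxE ?addr0. Qed.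

Lemma rgetZ m c (u : 'rV[k]_m) j : rget (c *: u) j = c * rget u j.
Proof. by rewrite /rget; case: insub => [o|]; rewrite ?mxE ?mulr0. Qed.

Lemma rget_row m (G : nat -> k) j : rget (\row_(i < m) G i) j = if (j < m)%N then G j else 0.
Proof.
case: ltnP => h; last by rewrite rget_out.
by rewrite -[j]/(nat_of_ord (Ordinal h)) rget_ord mxE.
Qed.

Lemma rget0 m j : rget (0 : 'rV[k]_m) j = 0.
Proof. by rewrite /rget; case: insub => [o|]; rewrite ?mxE. Qed.

Lemma rowrgetP m (u v : 'rV[k]_m) : (forall j, (j < m)%N -> rget u j = rget v j) -> u = v.
Proof. by move=> h; apply/rowP => j; rewrite -!rget_ord h. Qed.

Definition Sh a : 'rV[k]_n := \row_(j < n) rget a j.+1.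

Lemma rgetSh a j : rget (Sh a) j = rget a j.+1.
Proof. rewrite /Sh (@rget_row n (fun j => rget a j.+1)); case: (ltnP j n) => // h; rewrite rget_out //; lia. Qed.

Lemma rget_iter i a j : rget (iter i Sh a) j = rget a (j + i).
Proof. elim: i j => [|i IH] j; by rewrite ?addn0 //= rgetSh IH addnS. Qed.

Lemma iter_n a : iter n Sh a = 0.
Proof. apply: rowrgetP => j _; by rewrite rget_iter rget0 rget_out // leq_addl. Qed.

Lemma Sh0 : Sh 0 = 0.
Proof. by apply: rowrgetP => j _; rewrite rgetSh !rget0. Qed.

Definition ht a : nat := \max_(j : 'I_n | a 0 j != 0) j.+1.

Lemma ht_gt a j : rget a j != 0 -> (j < ht a)%N.
Proof.
case: (ltnP j n) => h; last by rewrite rget_out ?eqxx.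
rewrite -[j]/(nat_of_ord (Ordinal h)) rget_ord => h0.
exact: (leq_bigmax_cond (F := fun j : 'I_n => j.+1) _ h0).
Qed.

Lemma ht_pos a : a != 0 -> (0 < ht a)%N.
Proof.
move=> a0; case: (pickP (fun j : 'I_n => a 0 j != 0)) => [j hj|h].
  by apply: (leq_trans _ (ht_gt (j := j) _)); rewrite ?rget_ord.
case/eqP: a0; apply/rowP => j; rewrite mxE; by move/negbFE/eqP: (h j).
Qed.

Lemma ht_Sh a : a != 0 -> (ht (Sh a) < ht a)%N.
Proof.
move=> a0; apply: (@leq_trans (ht a).-1.+1); last by rewrite prednK // ht_pos.
rewrite ltnS; apply/bigmax_leqP => j; rewrite -rget_ord rgetSh => /ht_gt; lia.
Qed.

Lemma Sh_fix a : Sh a = a -> a = 0.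
Proof.
move=> h; apply/eqP; apply/negPn/negP => a0; have := ht_Sh a0; by rewrite h ltnn.
Qed.

End Shift.

Section Quiv.
Variables (k : finFieldType) (n : nat) (V : eqType) (r : 'rV[k]_n -> V) (t : 'rV[k]_n -> V).
Hypothesis rinj : injective r.
Hypothesis tE : forall a, t a = r (Sh a).

Lemma uwalk_cat u v w es1 es2 :
  uwalk r t u v es1 -> uwalk r t v w es2 -> uwalk r t u w (es1 ++ es2).
Proof.
elim: es1 u => [|e es IH] u /=; first by move=> /eqP ->.
by case/orP => /andP [-> h] h2; rewrite (IH _ h h2) ?orbT.
Qed.

Lemma uwalk_rev u w es : uwalk r t u w es -> uwalk r t w u (rev es).
Proof.
elim: es u => [|e es IH] u /=; first by rewrite eq_sym.
rewrite rev_cons -cats1.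
case/orP => /andP [/eqP <- h]; apply: uwalk_cat (IH _ h) _ => /=; by rewrite !eqxx ?orbT.
Qed.

Lemma dwalk_uwalk u w es : dwalk r t u w es -> uwalk r t u w es.
Proof. elim: es u => [|e es IH] u //= /andP [-> h]; by rewrite IH. Qed.

Lemma to0 a : exists es, all (fun e => e != 0) es && dwalk r t (r a) (r 0) es.
Proof.
have : forall h a, (ht a < h)%N -> exists es, all (fun e => e != 0) es && dwalk r t (r a) (r 0) es.
  elim=> [//|h IH] {}a ha.
  case: (eqVneq a 0) => [->|a0]; first by exists [::] => /=.
  have [es hes] := IH (Sh a) (leq_trans (ht_Sh a0) ha).
  exists (a :: es) => /=; rewrite a0 eqxx tE /=; exact: hes.
by apply.
Qed.

Lemma qconn (VP : pred V) : (forall C, VP C -> exists a, C = r a) ->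
  qconnected r t VP (fun a => a != 0).
Proof.
move=> hVP u w /hVP [a ->] /hVP [b ->].
have [es1 /andP [h1 w1]] := to0 a; have [es2 /andP [h2 w2]] := to0 b.
exists (es1 ++ rev es2); rewrite all_cat h1 all_rev h2 /=.
apply: uwalk_cat (dwalk_uwalk w1) (uwalk_rev (dwalk_uwalk w2)).
Qed.

Definition hV (v : V) : nat := \max_(a | r a == v) ht a.

Lemma hV_r a : hV (r a) = ht a.
Proof.
rewrite /hV (big_pred1 a) // => b /=; apply/eqP/eqP => [/rinj|->] //.
Qed.

Lemma joins_src e x y : e != 0 -> joins r t e x y -> (hV y <= hV x)%N -> r e = x.
Proof.
move=> e0 /orP [/andP [/eqP -> _]|/andP [/eqP hy /eqP hx]] // hle.
have := ht_Sh e0; rewrite -hV_r -tE hx -hV_r hy; lia.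
Qed.

Lemma nth_rot1 T (x0 : T) (s : seq T) i : (i < size s)%N ->
  nth x0 (rot 1 s) i = nth x0 s (i.+1 %% size s).
Proof.
case: s => [//|x s] /= hi; rewrite rot1_cons nth_rcons.
case: (ltnP i (size s)) => h.
  by rewrite modn_small //.
have -> : i = size s by lia.
by rewrite eqxx modnn.
Qed.

Lemma qacyc : qacyclic r t (fun a => a != 0).
Proof.
move=> [es [vs [es0 hsz /andP [ues _] hA hall]]].
set m := size es in hsz.
have m0 : (0 < m)%N by rewrite /m lt0n size_eq0.
have J : forall i, (i < m)%N -> joins r t (nth 0 es i) (nth (r 0) vs i) (nth (r 0) vs (i.+1 %% m)).
  move=> i hi; move/all_nthP: hall => /(_ (0, (r 0, r 0)) i).
  rewrite size_zip size_zip size_rot hsz minnn -/m minnn => /(_ hi).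
  by rewrite nth_zip ?size_zip ?size_rot ?hsz ?minnn // nth_zip ?size_rot // nth_rot1 ?hsz.
have NZ : forall i, (i < m)%N -> nth 0 es i != 0.
  by move=> i hi; move/all_nthP: hA => /(_ 0 i hi).
pose f (i : 'I_m) := hV (nth (r 0) vs i).
have [j hj] := @eq_bigmax _ f (ltac:(by rewrite card_ord)).
have MX : forall i, (i < m)%N -> (hV (nth (r 0) vs i) <= f j)%N.
  by move=> i hi; rewrite -hj; apply: (leq_bigmax (F := f) (Ordinal hi)).
set j' := ((j + m.-1) %% m)%N.
have hj' : (j' < m)%N by rewrite ltn_mod.
have hj'S : (j'.+1 %% m)%N = j.
  rewrite /j' -addn1 modnDml -addnA addn1 prednK // -modnDmr modnn addn0 modn_small //.
have e1 : r (nth 0 es j) = nth (r 0) vs j.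
  apply: joins_src (NZ _ (ltn_ord j)) (J _ (ltn_ord j)) _.
  by apply: MX; rewrite ltn_mod.
have e2 : r (nth 0 es j') = nth (r 0) vs j.
  apply: joins_src (NZ _ hj') _ (MX _ hj').
  move: (J _ hj'); rewrite hj'S /joins => /orP [] /andP [-> ->]; by rewrite ?orbT.
have jj : j' = j.
  apply/eqP; rewrite -(nth_uniq 0 hj' (ltn_ord j) ues); apply/eqP/rinj; by rewrite e1 e2.
have m1 : m = 1%N.
  move: jj; rewrite /j'; case: (ltnP 1 m) => hm; last lia.
  have hj2 : (j + m.-1 < m + m)%N by have := ltn_ord j; lia.
  case: (ltnP (j + m.-1) m) => h.
    rewrite modn_small //; lia.
  rewrite -(subnK h) modnDr modn_small; lia.
have := J _ (ltn_ord j); have := NZ _ (ltn_ord j).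
have hjm := ltn_ord j.
have j0 : (j : nat) = 0%N by lia.
rewrite j0 m1 modnn /joins orbb => nz /andP [/eqP h1 /eqP h2].
have : Sh (nth 0 es 0) = nth 0 es 0 by apply: rinj; rewrite -tE h1 h2.
move/Sh_fix => e0; by rewrite e0 eqxx in nz.
Qed.


Local Notation S := (@Sh k n).

Fixpoint orbit (u : 'rV[k]_n) m := if m is m'.+1 then u :: orbit (Sh u) m' else [::].

Lemma size_orbit u m : size (orbit u m) = m.
Proof. by elim: m u => [|m IH] u //=; rewrite IH. Qed.

Lemma mem_orbit x u m : x \in orbit u m -> exists2 i, (i < m)%N & x = iter i S u.
Proof.
elim: m u => [|m IH] u //=; rewrite inE => /orP [/eqP ->|/IH [i hi ->]]; first by exists 0%N.
by exists i.+1 => //; rewrite iterSr.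
Qed.

Lemma iter_mem_orbit i u m : (i < m)%N -> iter i S u \in orbit u m.
Proof.
elim: m i u => [|m IH] [|i] u //= h; rewrite inE ?eqxx //.
by rewrite -iterS iterSr IH ?orbT.
Qed.

Lemma dwalk_orbit u m : dwalk r t (r u) (r (iter m S u)) (orbit u m).
Proof. elim: m u => [|m IH] u /=; by rewrite ?eqxx // tE -iterS iterSr IH. Qed.

Lemma dwalk_eq u w es : dwalk r t (r u) w es ->
  es = orbit u (size es) /\ w = r (iter (size es) S u).
Proof.
elim: es u => [|e es IH] u /=; first by move/eqP.
move=> /andP [/eqP /rinj -> h]; rewrite tE in h.
have [-> ->] := IH _ h; by rewrite size_orbit -iterS iterSr.
Qed.

Lemma uniq_orbit u m : (forall i j, (i < m)%N -> (j < m)%N -> iter i S u = iter j S u -> i = j) ->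
  uniq (orbit u m).
Proof.
elim: m u => [|m IH] u //= h; apply/andP; split.
  apply/negP => /mem_orbit [i hi]; rewrite -iterSr => e; by move: (h 0%N i.+1 isT hi e).
apply: IH => i j hi hj; rewrite -!iterSr => /h; by move=> /(_ hi hj) [].
Qed.

Lemma all_orbit (P : pred 'rV[k]_n) u m : (forall i, (i < m)%N -> P (iter i S u)) -> all P (orbit u m).
Proof. by move=> h; apply/allP => x /mem_orbit [i hi ->]; apply: h. Qed.

Lemma top_nz u i : rget u n.-1 != 0 -> (i < n)%N -> iter i S u != 0.
Proof.
move=> hu hi; apply/eqP => h; move: (rget_iter i u (n.-1 - i)); rewrite h rget0 subnK; last lia.
by move=> h2; rewrite -h2 eqxx in hu.
Qed.

Lemma top_iter u i j : rget u n.-1 != 0 -> (i <= n)%N -> (j <= n)%N -> iter i S u = iter j S u -> i = j.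
Proof.
move=> hu; wlog: i j / (i < j)%N.
  move=> W hi hj e; case: (ltngtP i j) => h; [exact: W| exact/esym/(W j i)|by []].
move=> hij hi hj e; move: (rget_iter i u (n.-1 - i)) (rget_iter j u (n.-1 - i)).
rewrite e subnK; last lia.
rewrite [rget u (_ + j)]rget_out; last lia.
by move=> -> h2; rewrite h2 eqxx in hu.
Qed.

Lemma map_t_orbit u m : map t (orbit u m) = map r (orbit (Sh u) m).
Proof. by elim: m u => [|m IH] u //=; rewrite tE IH. Qed.

Lemma prop4 u : rget u n.-1 != 0 -> exists es,
  [/\ dpath r t (r u) (r 0) es, all (fun a => a != 0) es, size es = n &
      forall es', dpath r t (r u) (r 0) es' -> all (fun a => a != 0) es' -> es' = es].
Proof.
move=> hu; exists (orbit u n); split.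
- apply/andP; split; first by have := dwalk_orbit u n; rewrite iter_n.
  rewrite map_t_orbit -[_ :: _]/(map r (orbit u n.+1)) (map_inj_uniq rinj).
  apply: uniq_orbit => i j hi hj; apply: top_iter => //.
- by apply: all_orbit => i hi; apply: top_nz.
- by rewrite size_orbit.
move=> es' /andP [/dwalk_eq [e1 e2] _] hall.
have h0 : iter (size es') S u = 0 by apply: rinj; rewrite -e2.
have hs : size es' = n.
  case: (ltngtP (size es') n) => // h.
    by have := top_nz hu h; rewrite h0 eqxx.
  have := iter_mem_orbit u h; rewrite -e1 iter_n => /(allP hall); by rewrite eqxx.
by rewrite e1 hs.
Qed.

Definition Pre (u : 'rV[k]_n) (c : k) : 'rV[k]_n :=
  \row_(j < n) (if (j : nat) is j'.+1 then rget u j' else c).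

Lemma rget_Pre u c j : rget (Pre u c) j = if (j < n)%N then (if j is j'.+1 then rget u j' else c) else 0.
Proof. by rewrite /Pre (@rget_row _ n (fun j => if j is j'.+1 then rget u j' else c)). Qed.

Lemma Sh_Pre u c : rget u n.-1 = 0 -> Sh (Pre u c) = u.
Proof.
move=> hu; apply: rowrgetP => j hj; rewrite rgetSh rget_Pre.
case: ltnP => // h; have -> : j = n.-1 by lia.
by rewrite hu.
Qed.

Lemma Pre_Sh (a u : 'rV[k]_n) : Sh a = u -> a = Pre u (rget a 0).
Proof.
move=> <-; apply: rowrgetP => j hj; rewrite rget_Pre hj.
by case: j hj => [|j] // hj; rewrite rgetSh.
Qed.

Lemma Pre_inj u : (0 < n)%N -> injective (Pre u).
Proof. move=> n0 c c' /(congr1 (fun a : 'rV[k]_n => rget a 0)); by rewrite !rget_Pre n0. Qed.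

Lemma Sh_last (a : 'rV[k]_n) : (0 < n)%N -> rget (Sh a) n.-1 = 0.
Proof. by move=> n0; rewrite rgetSh prednK // (rget_out _ (leqnn n)). Qed.

Lemma preim_card (u : 'rV[k]_n) : (0 < n)%N ->
  #|[set a | Sh a == u]| = if rget u n.-1 == 0 then #|k| else 0%N.
Proof.
move=> n0; case: eqP => hu.
  have -> : [set a | Sh a == u] = Pre u @: setT.
    apply/setP => a; rewrite inE; apply/eqP/imsetP => [h|[c _ ->]].
      by exists (rget a 0) => //; apply: Pre_Sh.
    by apply: Sh_Pre.
  by rewrite card_imset ?cardsT //; apply: Pre_inj.
apply/eqP; rewrite cards_eq0; apply/eqP/setP => a; rewrite !inE.
by apply/negP => /eqP h; apply: hu; rewrite -h Sh_last.
Qed.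

Lemma preim0_card : (0 < n)%N -> #|[set a : 'rV[k]_n | (a != 0) && (Sh a == 0)]| = (#|k| - 1)%N.
Proof.
move=> n0; have -> : [set a : 'rV[k]_n | (a != 0) && (Sh a == 0)] = [set a : 'rV[k]_n | Sh a == 0] :\ 0.
  by apply/setP => a; rewrite !inE.
have := cardsD1 0 [set a : 'rV[k]_n | Sh a == 0]; rewrite preim_card // rget0 eqxx inE Sh0 eqxx /=.
by move=> ->; rewrite add1n subn1.
Qed.

End Quiv.

Section Fin.
Variables (k : finFieldType) (n : nat) (F : 'rV[k]_(n.+1)).
Hypothesis hF0 : rget F 0 != 0.
Hypothesis hFi : forall i, i != 0%N -> rget F i = 0.

Definition keyv (v : 'rV[k]_(n.+1)) : 'rV[k]_n := \row_(j < n) rget v j.+1.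

Lemma rget_key v j : rget (keyv v) j = if (j < n)%N then rget v j.+1 else 0.
Proof. by rewrite /keyv (@rget_row _ n (fun j => rget v j.+1)). Qed.

Lemma coset_key u w : coset F u = coset F w <-> keyv u = keyv w.
Proof.
split.
  move/coset_eqE => [c ->]; apply: rowrgetP => j hj.
  rewrite !rget_key hj rgetD rgetZ (hFi (i := j.+1)) //. by rewrite mulr0 addr0.
move=> e; apply: (coset_eqI (c := (rget u 0 - rget w 0) / rget F 0)).
apply: rowrgetP => j hj; rewrite rgetD rgetZ.
case: j hj => [|j] hj; first by rewrite divfK // addrC subrK.
rewrite (hFi (i := j.+1)) // mulr0 addr0.
have hj' : (j < n)%N := hj.
by move: (congr1 (fun a : 'rV[k]_n => rget a j) e); rewrite !rget_key hj'.
Qed.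

Lemma key_X a : keyv (hvec n (Xv k * hpoly a)) = a.
Proof.
apply: rowrgetP => j hj; rewrite rget_key hj hvecX.
by rewrite (@rget_row _ n.+1 (fun i => if i is i'.+1 then rget a i' else 0)) ltnS hj.
Qed.

Lemma key_Y a : keyv (hvec n (Yv k * hpoly a)) = Sh a.
Proof.
apply: rowrgetP => j hj; rewrite rget_key hj hvecY rgetSh.
by rewrite (@rget_row _ n.+1 (fun i => rget a i)) ltnS hj.
Qed.

Lemma Rsrc_inj : injective (Rsrc F).
Proof. by move=> a b /coset_key; rewrite !key_X. Qed.

Lemma RtgtE a : Rtgt F a = Rsrc F (Sh a).
Proof. by apply/coset_key; rewrite key_X key_Y. Qed.

Lemma vertexE C : isVertex F C -> exists a, C = Rsrc F a.
Proof.
move=> /existsP [v /eqP ->]; exists (keyv v); apply/coset_key; by rewrite key_X.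
Qed.

Lemma coset0E : coset F 0 = Rsrc F 0.
Proof.
apply/coset_key; rewrite key_X; apply: rowrgetP => j _; by rewrite rget_key !rget0 if_same.
Qed.

End Fin.

Theorem mainTheorem6 (k : finFieldType) (n : nat) (F : 'rV[k]_(n.+1))
    (p : {poly {poly k}}) (m d : nat) :
  homog m p -> irreducible_elt p -> (0 < d)%N -> hpoly F = p ^+ d ->
  ~ ((forall a b : 'rV[k]_n, Rtgt F a = Rtgt F b -> a = b) /\
     (forall C, isVertex F C -> exists a : 'rV[k]_n, Rtgt F a = C)) ->
  exists l : 'rV[k]_n,
    [/\ Rsrc F l = Rtgt F l,
        (forall a, Rsrc F a = Rtgt F a -> a = l),
        Rsrc F l = coset F 0,
        qtree (Rsrc F) (Rtgt F) (isVertex F) (fun a => a != l) &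
        [/\ (* 1 *) (forall a, a != l -> Rsrc F a != coset F 0),
            (* 2 *) (forall v, isVertex F v -> v != coset F 0 ->
                       #|[set a | (a != l) && (Rsrc F a == v)]| = 1%N),
            (* 3 *) (forall v, isVertex F v -> v != coset F 0 ->
                       #|[set a | (a != l) && (Rtgt F a == v)]| = #|k| \/
                       #|[set a | (a != l) && (Rtgt F a == v)]| = 0%N),
            (* 3' *) #|[set a | (a != l) && (Rtgt F a == coset F 0)]| = (#|k| - 1)%N
          & (* 4 *) (forall v, isVertex F v ->
                       (forall a, a != l -> Rtgt F a != v) ->
                       exists es, [/\ dpath (Rsrc F) (Rtgt F) v (coset F 0) es,
                                      all (fun a => a != l) es,
                                      size es = d &
                                      forall es', dpath (Rsrc F) (Rtgt F) v (coset F 0) es' ->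
                                                  all (fun a => a != l) es' -> es' = es])]].
Proof.
move=> _ irr d0 hF hnb.
have Fn := F_last hnb.
have [nd F0 Fi] := F_form irr d0 hF Fn.
subst d.
have rinj := Rsrc_inj F0 Fi.
have tE := RtgtE F0 Fi.
have vE := vertexE F0 Fi.
have c0 := coset0E F0 Fi.
exists 0; split.
- by rewrite tE Sh0.
- by move=> a; rewrite tE => /rinj e; apply: Sh_fix.
- by rewrite c0.
- split; [by move=> u w hu hw; exact: (qconn tE vE hu hw) | exact: qacyc rinj tE].
split.
- by move=> a a0; rewrite c0; apply/eqP => /rinj e; rewrite e eqxx in a0.
- move=> v /vE [u ->]; rewrite c0 => u0.
  have u0' : u != 0 by apply/eqP => e; rewrite e eqxx in u0.
  rewrite (_ : [set a | (a != 0) && (Rsrc F a == Rsrc F u)] = [set u]) ?cards1 //.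
  apply/setP => a; rewrite !inE; apply/andP/eqP => [[_ /eqP /rinj] //|->].
  by rewrite u0' eqxx.
- move=> v /vE [u ->]; rewrite c0 => u0.
  have u0' : u != 0 by apply/eqP => e; rewrite e eqxx in u0.
  rewrite (_ : [set a | (a != 0) && (Rtgt F a == Rsrc F u)] = [set a | Sh a == u]).
    rewrite preim_card //; case: ifP; by [left|right].
  apply/setP => a; rewrite !inE tE; apply/andP/eqP => [[_ /eqP /rinj] //|e].
  split; last by rewrite e.
  by apply/eqP => a0; move: e; rewrite a0 Sh0 => e; rewrite e eqxx in u0'.
- rewrite (_ : [set a | (a != 0) && (Rtgt F a == coset F 0)] = [set a | (a != 0) && (Sh a == 0)]) ?preim0_card //.
  apply/setP => a; rewrite !inE tE c0.
  by congr (_ && _); apply/eqP/eqP => [/rinj|->].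
move=> v /vE [u ->] hno.
have hu : rget u n.-1 != 0.
  apply/negP => /eqP hu.
  have hP : Pre u 1 != 0.
    apply/eqP => /(congr1 (fun a : 'rV[k]_n => rget a 0)).
    by rewrite rget_Pre d0 rget0 => /eqP; rewrite oner_eq0.
  by move: (hno _ hP); rewrite tE Sh_Pre // eqxx.
rewrite c0; exact: prop4 rinj tE u hu.
Qed.
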